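(* Let $m,n$ be positive integers with $m>n$ and $m\ge 3$, and let $q$ be an odd prime. Let $X,y_1,y_2$ be positive integers with $X>1$, $\gcd(X,q)=1$, $y_1>y_2$ and $X^m-X^n=q^{y_1}-q^{y_2}$. Put $E=e_q(X)$, $N=(m-n)/E$ (an integer) and $e=\nu_q(N)$, and assume $N$ is odd. With \[ A_E(t)=\begin{cases} t-1 & E=1,\\ t^{E-1}+\cdots+t+1 & E>1,\end{cases}\quad B_{n,E}(t)=\begin{cases} t^n & E=1,\\ t^n(t-1) & E>1,\end{cases}\quad I_{E,N}(t)=\sum_{j=0}^{N-1}t^{Ej}, \] one has $y_2>e$, $I_{E,N}(X)\equiv 0\pmod{q^e}$, and there is a positive integer $K$ with $\gcd(K,q)=1$ such that \[ A_E(X)=K\,q^{y_2-e},\qquad B_{n,E}(X)\,I_{E,N}(X)\,K=q^e(q^{y_1-y_2}-1). \] Moreover: (i) if $E=1$, then $y_1>2(y_2-e)$, and $y_1>m(y_2-e)$ if $K>1$; (ii) if $E>1$, then $y_1\ge \frac{m}{E-1}(y_2-e)$ if $K>1$, and $y_1\ge 2(y_2-e)$ if $\dfrac{(y_2-e)(m-2E+2)+E-1}{m+\delta(E-1)}\ge\dfrac{\log 2}{\log q}$, where $\delta=1$ if $X^m>q^{y_1}$ and $\delta=0$ if $X^m<q^{y_1}$.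
   Context: For a positive integer $M$ and an integer $A$ coprime to $M$, $e_M(A)$ denotes the least positive integer $e$ such that $A^e\equiv \pm1\pmod M$. For a prime $p$, $\nu_p$ denotes the $p$-adic valuation. *)

(* Defs.v *)
From Stdlib Require Export Reals.
From mathcomp Require Export all_boot.
(* after mathcomp, the key %R no longer denotes Stdlib's R_scope *)
Delimit Scope R_scope with Re.

(* e_M(A): least positive e with A^e = +-1 (mod M).  For A coprime to M
   (M >= 1) such an e exists and is <= M (it divides the order of A mod M,
   which is <= totient M <= M), so searching e in 1..M is exhaustive. *)
Definition pm1_mod (M a : nat) : bool :=
  (a == 1 %[mod M]) || (M %| a + 1).

Definition e_ord (M A : nat) : nat :=
  (find (fun e => pm1_mod M (A ^ e)) (iota 1 M)).+1.

Definition A_poly (E t : nat) : nat :=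
  if E == 1 then t - 1 else \sum_(i < E) t ^ i.

Definition B_poly (n E t : nat) : nat :=
  if E == 1 then t ^ n else t ^ n * (t - 1).

Definition I_poly (E N t : nat) : nat := \sum_(j < N) t ^ (E * j).

(* Main.v *)
Require Import Defs.
From Stdlib Require Import Lra Psatz.
From mathcomp Require Import all_algebra zify.
Import GRing.Theory.
Set Implicit Arguments. Unset Strict Implicit.

Definition gs (Z n : nat) := \sum_(j < n) Z ^ j.

Lemma gsS Z n : gs Z n.+1 = gs Z n + Z ^ n.
Proof. by rewrite /gs big_ord_recr. Qed.

Lemma gs_geom Z n : (Z - 1) * gs Z n = Z ^ n - 1.
Proof.
case: Z => [|Z].
  by rewrite [0 - 1]/= mul0n; case: n => [|n]; rewrite ?expn0 ?exp0n.
elim: n => [|n IH]; first by rewrite /gs big_ord0 muln0 expn0.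
rewrite gsS expnS.
have : 0 < Z.+1 ^ n by rewrite expn_gt0.
move: IH; set P := Z.+1 ^ n; set S := gs _ _ => IH HP.
nia.
Qed.

Lemma gs_gt0 Z n : 0 < n -> 0 < gs Z n.
Proof. case: n => // n _; rewrite /gs big_ord_recl expn0; lia. Qed.

Lemma pow_1q t q j : exists c, (1 + t*q)^j = 1 + j*t*q + q^2*c.
Proof.
elim: j => [|j [c IH]]; first by exists 0; rewrite expn0; lia.
exists (j*t*t + c + c*t*q). rewrite expnS IH. nia.
Qed.

Lemma gs_1q t q n : exists C, gs (1 + t*q) n = n + t*q*'C(n,2) + q^2*C.
Proof.
elim: n => [|n [C IH]]; first by exists 0; rewrite /gs big_ord0 bin0n; lia.
have [c Hc] := pow_1q t q n.
exists (C + c). rewrite gsS IH Hc binS bin1. nia.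
Qed.

Lemma logn_gs_q q t : prime q -> odd q -> logn q (gs (1 + t*q) q) = 1.
Proof.
move=> pq oq.
have [C HC] := gs_1q t q q.
have -> : gs (1 + t*q) q = q * (1 + q * (t * q.-1./2 + C)).
  rewrite HC bin2odd //. nia.
have q0 : 0 < q by exact: prime_gt0.
rewrite lognM // ?addn_gt0 // logn_prime // eqxx.
rewrite logn_coprime ?addn0 //.
by rewrite /coprime addnC mulnC gcdnMDl gcdn1.
Qed.

Lemma gs_mul Y M k : 0 < Y - 1 -> gs Y (k*M) = gs Y M * gs (Y^M) k.
Proof.
move=> Y1; apply/eqP; rewrite -(eqn_pmul2l Y1) gs_geom mulnA gs_geom gs_geom.
by rewrite -expnM mulnC.
Qed.

Lemma dvd_pow1 q Y M : q %| Y - 1 -> q %| Y ^ M - 1.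
Proof. by move=> H; rewrite -gs_geom dvdn_mulr. Qed.

Lemma lte q : prime q -> odd q -> forall N Y, 0 < N -> 1 < Y -> q %| Y - 1 ->
  logn q (gs Y N) = logn q N.
Proof.
move=> pq oq N; elim/ltn_ind: N => N IH Y N0 Y1 qY.
have q1 := prime_gt1 pq.
have [t Ht] : exists t, Y = 1 + t * q.
  exists ((Y - 1) %/ q); rewrite divnK //; lia.
case: (boolP (q %| N)) => qN.
  have NE : N = q * (N %/ q) by rewrite mulnC divnK.
  have M0 : 0 < N %/ q by rewrite divn_gt0 ?prime_gt0 // dvdn_leq.
  have MN : N %/ q < N by rewrite ltn_Pdiv.
  have E1 : gs Y N = gs Y (N %/ q) * gs (Y ^ (N %/ q)) q.
    by rewrite {1}NE gs_mul //; lia.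
  have E2 : logn q N = 1 + logn q (N %/ q).
    by rewrite {1}NE (lognM q (prime_gt0 pq) M0) logn_prime // eqxx.
  have YM1 : 1 < Y ^ (N %/ q) by rewrite -(exp1n (N %/ q)) ltn_exp2r.
  have [u Hu] : exists u, Y ^ (N %/ q) = 1 + u * q.
    exists ((Y ^ (N %/ q) - 1) %/ q); rewrite divnK ?dvd_pow1 //; lia.
  rewrite E1 E2 lognM ?gs_gt0 //; last by rewrite prime_gt0.
  rewrite IH // Hu logn_gs_q //; lia.
have [C HC] := gs_1q t q N.
rewrite -Ht in HC.
rewrite (logn_coprime (m:=N)) ?prime_coprime //.
apply: logn_coprime; rewrite prime_coprime // HC.
rewrite -addnA dvdn_addl //.
apply: dvdn_add; first by apply: dvdn_mulr; apply: dvdn_mull.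
by apply: dvdn_mulr; apply: dvdn_exp.
Qed.

Lemma fermat1 q X : prime q -> coprime X q -> 0 < X -> q %| X ^ q.-1 - 1.
Proof.
move=> pq cX X0.
have q0 := prime_gt0 pq.
have H : q %| X ^ q - X.
  rewrite -eqn_mod_dvd ?fermat_little //.
  by rewrite -{1}(expn1 X) leq_pexp2l.
have E : X ^ q - X = X * (X ^ q.-1 - 1).
  rewrite mulnBr muln1 -expnS prednK //.
by move: H; rewrite E Gauss_dvdr // coprime_sym.
Qed.

Lemma e_ord_spec q X : prime q -> coprime X q -> 1 < X ->
  [/\ 0 < e_ord q X, pm1_mod q (X ^ e_ord q X) &
      forall k, 0 < k < e_ord q X -> ~~ pm1_mod q (X ^ k)].
Proof.
move=> pq cX X1.
have q1 := prime_gt1 pq.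
set a := (fun e => pm1_mod q (X ^ e)).
have Hh : has a (iota 1 q).
  apply/hasP; exists q.-1; first by rewrite mem_iota; lia.
  rewrite /a /pm1_mod eqn_mod_dvd ?fermat1 //; last by rewrite expn_gt0; lia.
  lia.
have Hf : find a (iota 1 q) < q by rewrite -{2}(size_iota 1 q) -has_find.
rewrite /e_ord -/a; split => //.
  by have := nth_find 0 Hh; rewrite nth_iota // add1n.
move=> k /andP [k0 kE].
have := @before_find _ 0 a (iota 1 q) k.-1.
rewrite nth_iota; last lia.
rewrite add1n prednK // => H. rewrite /a in H. rewrite H //.
Qed.

Lemma pm1_F q a : prime q -> 0 < a ->
  pm1_mod q a = ((a%:R : 'F_q) == 1)%R || ((a%:R : 'F_q) == -1)%R.
Proof.
move=> pq a0; have ch := pchar_Fp pq.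
rewrite /pm1_mod eqn_mod_dvd // !(dvdn_pcharf ch) natrB // subr_eq0.
by rewrite natrD addr_eq0.
Qed.

Lemma E_div q X r : prime q -> odd q -> coprime X q -> 1 < X ->
  q %| X ^ r - 1 -> odd (r %/ e_ord q X) ->
  e_ord q X %| r /\ q %| X ^ e_ord q X - 1.
Proof.
move=> pq oq cX X1 qr oN.
have [E0 HE Hmin] := e_ord_spec pq cX X1.
set E := e_ord q X in E0 HE Hmin oN *.
have ch := pchar_Fp pq.
have Xk0 : forall k, 0 < X ^ k by move=> k; rewrite expn_gt0; lia.
set x : 'F_q := (X%:R)%R.
have pmx : forall k, pm1_mod q (X ^ k) = (x ^+ k == 1)%R || (x ^+ k == -1)%R.
  by move=> k; rewrite pm1_F // natrX.
have xr : (x ^+ r = 1)%R.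
  by apply/eqP; move: qr; rewrite (dvdn_pcharf ch) natrB // natrX subr_eq0.
rewrite pmx in HE.
set s := (x ^+ E)%R in HE.
have ss : (s * s = 1)%R by case/orP: HE => /eqP ->; rewrite ?mulr1 ?mulrNN ?mulr1.
have su : forall u, (s ^+ u == 1)%R || (s ^+ u == -1)%R.
  move=> u; case/orP: HE => /eqP ->; first by rewrite expr1n eqxx.
  by rewrite -signr_odd; case: (odd u); rewrite ?expr1 ?expr0 eqxx ?orbT.
have rE : r = r %/ E * E + r %% E by apply: divn_eq.
have Et : (x ^+ (r %% E) = s ^+ (r %/ E))%R.
  have H1 : (s ^+ (r %/ E) * x ^+ (r %% E) = 1)%R.
    by rewrite /s -exprM mulnC -exprD -rE.
  rewrite -[LHS]mul1r -[X in (X * _)%R](expr1n _ (r %/ E)) -ss exprMn -mulrA H1 mulr1 //.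
have t0 : r %% E = 0.
  case: (posnP (r %% E)) => // tp; exfalso.
  have := Hmin (r %% E); rewrite tp ltn_mod E0 pmx Et su => /(_ isT) //.
have dE : E %| r by rewrite /dvdn t0.
split => //.
case/orP: HE => /eqP Hs.
  by rewrite (dvdn_pcharf ch) natrB // natrX subr_eq0 -/x -/s Hs.
exfalso.
have : (x ^+ r = -1)%R.
  by rewrite -(divnK dE) mulnC exprM -/s Hs -signr_odd oN expr1.
rewrite xr => H.
have q2 : q %| 2.
  by rewrite (dvdn_pcharf ch) -[2%N]/(1+1)%N natrD {1}H addNr.
have q2l := dvdn_leq (ltn0Sn 1) q2.
have q1 := prime_gt1 pq.
have q2e : q = 2 by lia.
by move: oq; rewrite q2e.
Qed.

Lemma gs_bound X E : 1 < X -> gs X E.+1 < 2 * X ^ E.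
Proof.
move=> X1; elim: E => [|E IH]; first by rewrite /gs big_ord_recl big_ord0 expn0.
rewrite gsS !expnS.
have : 2 * X ^ E <= X * X ^ E by rewrite leq_mul2r X1 orbT.
lia.
Qed.

Lemma Wb q X m n y1 y2 E : 1 < X -> 1 < q -> y2 < y1 -> n <= m - E -> E <= m ->
  q ^ y1 - q ^ y2 = X ^ m - X ^ n -> X ^ (m - E) * (X ^ E - 1) < q ^ y1.
Proof.
move=> X1 q0 y12 nE Em H.
have H1 : X ^ (m - E) * (X ^ E - 1) = X ^ m - X ^ (m - E).
  by rewrite mulnBr muln1 -expnD subnK.
have H2 : X ^ n <= X ^ (m - E) by rewrite leq_pexp2l //; lia.
have H3 : 0 < q ^ y2 by rewrite expn_gt0; lia.
have H4 : q ^ y2 < q ^ y1 by rewrite ltn_exp2l.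
lia.
Qed.

Lemma iia q X m E d y1 K A : 1 < X -> 1 < q -> 1 < K -> A = K * q ^ d ->
  A * (X - 1) = X ^ E - 1 -> 1 < E -> E <= m ->
  X ^ (m - E) * (X ^ E - 1) < q ^ y1 -> d * m < y1 * (E - 1).
Proof.
move=> X1 q1 K1 HA HAX E1 Em HW.
set a := m - E in HW *; set b := E - 1.
have mE : m = b + (a + 1) by rewrite /a /b; lia.
have Eb : E = b + 1 by rewrite /b; lia.
have m0 : 0 < m by lia.
have b0 : 0 < b by rewrite /b; lia.
set Z := X ^ E - 1 in HAX HW *.
set W := X ^ a * Z in HW *.
have S1 : 2 ^ m * q ^ (d * m) <= A ^ m.
  rewrite (expnM q d m) -expnMn leq_exp2r // HA leq_mul2r; apply/orP; right; lia.
have S2 : Z ^ m <= (2 * (X - 1)) ^ m * W ^ b.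
  have Za : Z ^ (a + 1) <= X ^ m * (X ^ a) ^ b.
    have : Z ^ (a + 1) <= (X ^ E) ^ (a + 1) by rewrite leq_exp2r //; rewrite /Z; lia.
    rewrite -!expnM -expnD.
    have -> : E * (a + 1) = m + a * b by rewrite Eb mE; nia.
    done.
  have Xm : X ^ m <= (2 * (X - 1)) ^ m by rewrite leq_exp2r //; lia.
  rewrite {1}mE expnD /W (expnMn (X ^ a) Z b).
  apply: (leq_trans (leq_mul (leqnn (Z ^ b)) Za)).
  have e1 : Z ^ b * (X ^ m * (X ^ a) ^ b) = X ^ m * ((X ^ a) ^ b * Z ^ b) by nia.
  rewrite e1; apply: leq_mul => //.
have S3 : A ^ m <= 2 ^ m * W ^ b.
  have : A ^ m * (X - 1) ^ m <= (2 ^ m * W ^ b) * (X - 1) ^ m.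
    rewrite -expnMn HAX; apply: (leq_trans S2); rewrite expnMn; nia.
  rewrite leq_pmul2r //; rewrite expn_gt0; lia.
have S4 : W ^ b < q ^ (y1 * b) by rewrite expnM ltn_exp2r.
have : q ^ (d * m) < q ^ (y1 * b).
  rewrite -(ltn_pmul2l (expn_gt0 2 m)).
  apply: (leq_ltn_trans S1); apply: (leq_ltn_trans S3).
  rewrite ltn_pmul2l //; rewrite expn_gt0 //.
by rewrite ltn_exp2l.
Qed.

Lemma iib q X m E d y1 K A del : 1 < X -> 1 < q -> 0 < K -> A = K * q ^ d ->
  A < 2 * X ^ (E - 1) -> 0 < m -> 1 < E -> X ^ m <= 2 ^ del * q ^ y1 ->
  q ^ (d * m) < 2 ^ (m + del * (E - 1)) * q ^ (y1 * (E - 1)).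
Proof.
move=> X1 q1 K0 HA HAX m0 E1 Hm.
have S1 : q ^ (d * m) <= A ^ m.
  rewrite (expnM q d m) leq_exp2r // HA; apply: leq_pmull K0.
have S2 : A ^ m < (2 * X ^ (E - 1)) ^ m by rewrite ltn_exp2r.
have S3 : (2 * X ^ (E - 1)) ^ m = 2 ^ m * (X ^ m) ^ (E - 1).
  by rewrite expnMn -!expnM (mulnC m).
have S4 : (X ^ m) ^ (E - 1) <= (2 ^ del * q ^ y1) ^ (E - 1).
  by rewrite leq_exp2r //; lia.
have S5 : (2 ^ del * q ^ y1) ^ (E - 1) = 2 ^ (del * (E - 1)) * q ^ (y1 * (E - 1)).
  by rewrite expnMn -!expnM.
apply: (leq_ltn_trans S1); apply: (leq_trans S2).
rewrite S3 expnD -mulnA leq_mul2l -S5 S4 orbT //.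
Qed.
Lemma INR_muln a b : INR (a * b) = (INR a * INR b)%Re.
Proof. exact: mult_INR. Qed.
Lemma INR_addn a b : INR (a + b) = (INR a + INR b)%Re.
Proof. exact: plus_INR. Qed.
Lemma INR_expn a k : INR (a ^ k) = (INR a ^ k)%Re.
Proof. elim: k => [|k IH]; first by rewrite expn0. by rewrite expnS INR_muln IH. Qed.
Lemma INR_subn a b : b <= a -> INR (a - b) = (INR a - INR b)%Re.
Proof. move=> H; apply: minus_INR; by apply/leP. Qed.

Lemma ln_INR_pow a k : 0 < a -> ln (INR (a ^ k)) = (INR k * ln (INR a))%Re.
Proof. move=> a0; rewrite INR_expn ln_pow //; apply: lt_0_INR; by apply/ltP. Qed.

Lemma real_part (q d m E M : nat) (D : R) : 1 < q -> 1 <= d -> 1 <= E ->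
  D = INR M -> (0 < D)%Re ->
  q ^ (d * m) < 2 ^ M * q ^ ((2 * d - 1) * (E - 1)) ->
  ((INR d * (INR m - 2 * INR E + 2) + INR E - 1) / D
     >= ln 2 / ln (INR q))%Re -> False.
Proof.
move=> q1 d1 E1 DM D0 H Hc.
have L0 : (0 < ln (INR q))%Re.
  rewrite -ln_1; apply: ln_increasing; first lra.
  have := lt_INR 1 q; rewrite /=; apply; by apply/ltP.
have H' : (ln (INR (q ^ (d * m))) < ln (INR (2 ^ M * q ^ ((2 * d - 1) * (E - 1)))))%Re.
  apply: ln_increasing; first by apply: lt_0_INR; apply/ltP; rewrite expn_gt0; lia.
  by apply: lt_INR; apply/ltP.
rewrite INR_muln ln_mult in H'; first last.
- apply: lt_0_INR; apply/ltP; rewrite expn_gt0; lia.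
- apply: lt_0_INR; apply/ltP; rewrite expn_gt0; lia.
rewrite !ln_INR_pow in H'; try lia.
rewrite !INR_muln INR_subn ?INR_muln in H'; last lia.
rewrite INR_subn in H'; last lia.
have I2 : INR 2 = 2%Re by simpl; ring.
rewrite I2 in H'.
have Hc' : (ln 2 * D <= (INR d * (INR m - 2 * INR E + 2) + INR E - 1) * ln (INR q))%Re.
  set P := (INR d * _ + _ - 1)%Re in Hc.
  have := Rmult_le_compat_r (D * ln (INR q)) _ _ (ltac:(nra)) (Rge_le _ _ Hc).
  have -> : (ln 2 / ln (INR q) * (D * ln (INR q)) = ln 2 * D)%Re by field; lra.
  have -> : (P / D * (D * ln (INR q)) = P * ln (INR q))%Re by field; lra.
  done.
rewrite DM in Hc'.
simpl INR in H', Hc'.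
nra.
Qed.

Theorem mainTheorem7 (m n q X y1 y2 : nat) :
  0 < n -> n < m -> 3 <= m -> prime q -> odd q ->
  1 < X -> coprime X q -> y2 > 0 -> y2 < y1 ->
  X ^ m - X ^ n = q ^ y1 - q ^ y2 ->
  let E := e_ord q X in
  let N := (m - n) %/ E in
  let e := logn q N in
  odd N ->
  [/\ E %| (m - n),
      e < y2,
      q ^ e %| I_poly E N X
    & exists K : nat,
      [/\ 0 < K /\ coprime K q,
          A_poly E X = K * q ^ (y2 - e),
          B_poly n E X * I_poly E N X * K = q ^ e * (q ^ (y1 - y2) - 1),
          (E = 1 ->
             2 * (y2 - e) < y1 /\ (1 < K -> m * (y2 - e) < y1))
        & (1 < E ->
             (1 < K ->
               (INR y1 >= INR m / INR (E - 1) * INR (y2 - e))%Re) /\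
             (let delta : R := if q ^ y1 < X ^ m then 1%Re else 0%Re in
              ((INR (y2 - e) * (INR m - 2 * INR E + 2) + INR E - 1)
                 / (INR m + delta * (INR E - 1))
                 >= ln 2 / ln (INR q))%Re ->
              2 * (y2 - e) <= y1))]].
Proof.
move=> n0 nm m3 pq oq X1 cX y20 y21 Heq E N e oN.
have q1 := prime_gt1 pq.
have [E0 HE Hmin] := e_ord_spec pq cX X1.
rewrite -/E in E0 HE Hmin.
have r0 : 0 < m - n by lia.
have Xnr : X ^ n * (X ^ (m - n) - 1) = X ^ m - X ^ n.
  by rewrite mulnBr muln1 -expnD subnKC // ltnW.
have qk : q ^ y2 * (q ^ (y1 - y2) - 1) = q ^ y1 - q ^ y2.
  by rewrite mulnBr muln1 -expnD subnKC // ltnW.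
have H0 : X ^ n * (X ^ (m - n) - 1) = q ^ y2 * (q ^ (y1 - y2) - 1).
  by rewrite Xnr qk Heq.
have cqX : forall j, coprime q (X ^ j).
  by move=> j; apply: coprimeXr; rewrite coprime_sym.
have Xg : forall j, 0 < X ^ j by move=> j; rewrite expn_gt0; lia.
have Xg1 : forall j, 0 < j -> 1 < X ^ j.
  by move=> j j0; rewrite -(exp1n j) ltn_exp2r.
have cqk : coprime q (q ^ (y1 - y2) - 1).
  rewrite prime_coprime //; apply/negP => Hd.
  have Hq : q ^ (y1 - y2) = (q ^ (y1 - y2) - 1) + 1 by rewrite subnK // expn_gt0; lia.
  have : q %| q ^ (y1 - y2) by apply: dvdn_exp => //; lia.
  by rewrite Hq dvdn_addr // Euclid_dvd1.
have Xr1 : 0 < X ^ (m - n) - 1 by have := Xg1 _ r0; lia.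
have qk0 : 0 < q ^ (y1 - y2) - 1.
  have : 1 < q ^ (y1 - y2) by rewrite -(exp1n (y1 - y2)) ltn_exp2r; lia.
  lia.
have lr : logn q (X ^ (m - n) - 1) = y2.
  have := congr1 (logn q) H0.
  rewrite (logn_Gauss _ (cqX n)) => ->.
  rewrite lognM; [ | rewrite expn_gt0; lia | lia].
  by rewrite pfactorK // logn_coprime // addn0.
have qr : q %| X ^ (m - n) - 1.
  apply: dvdn_trans (pfactor_dvdnn q _); rewrite lr; apply: dvdn_exp => //.
have [dE qE] := E_div pq oq cX X1 qr oN.
have NE : N * E = m - n by apply: divnK.
have N0 : 0 < N by rewrite lt0n; apply/negP => /eqP H; rewrite H mul0n in NE; lia.
have Y1 : 1 < X ^ E by apply: Xg1.
have IP : I_poly E N X = gs (X ^ E) N.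
  by rewrite /I_poly /gs; apply: eq_bigr => j _; rewrite expnM.
have YI : (X ^ E - 1) * gs (X ^ E) N = X ^ (m - n) - 1.
  by rewrite gs_geom -expnM mulnC NE.
have lI : logn q (gs (X ^ E) N) = e by apply: lte.
have Y0 : 0 < X ^ E - 1 by rewrite subn_gt0.
have lY : logn q (X ^ E - 1) = y2 - e.
  have := congr1 (logn q) YI; rewrite (lognM q Y0 (gs_gt0 _ N0)) lI lr => H.
  by rewrite -H addnK.
have ey2 : e < y2.
  have : 0 < logn q (X ^ E - 1) by rewrite logn_gt0 mem_primes pq Y0 qE.
  by rewrite lY subn_gt0.
have Em : E <= m - n by apply: dvdn_leq.
have [AY A0 lA] : [/\ B_poly n E X * A_poly E X = X ^ n * (X ^ E - 1),
    0 < A_poly E X & logn q (A_poly E X) = y2 - e].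
  rewrite /A_poly /B_poly; case: (eqVneq E 1) => [E1|E1].
    rewrite E1 expn1 in lY; rewrite E1 ?eqxx /= expn1.
    by split => //; rewrite subn_gt0.
  have X10 : 0 < X - 1 by rewrite subn_gt0.
  have nq : ~~ (q %| X - 1).
    have := Hmin 1; rewrite /pm1_mod expn1 eqn_mod_dvd; last exact: ltnW.
    have E1' : 0 < 1 < E by apply/andP; split => //; rewrite ltn_neqAle eq_sym E1 E0.
    by move/(_ E1'); rewrite negb_or => /andP [].
  have GX := gs_geom X E.
  split.
  - by rewrite -mulnA -/(gs X E) GX.
  - by rewrite -/(gs X E) gs_gt0.
  - rewrite -/(gs X E) -lY -GX (lognM q X10 (gs_gt0 X E0)).
    by rewrite (logn_coprime (m := X - 1)) ?prime_coprime.
have [K cK AK] := pfactor_coprime pq A0.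
rewrite lA in AK.
have K0 : 0 < K by move: A0; rewrite AK; case: (K).
have qd0 : 0 < q ^ (y2 - e) by rewrite expn_gt0 prime_gt0.
have nEm : n <= m - E by clear - Em nm; lia.
have m0 : 0 < m by clear - m3; lia.
have HW := Wb X1 q1 y21 nEm (leq_trans Em (leq_subr _ _)) (esym Heq).
split => //.
  by rewrite IP -lI pfactor_dvdnn.
exists K; split => //.
- by split => //; rewrite coprime_sym.
- apply/eqP; rewrite -(eqn_pmul2r qd0); apply/eqP.
  have -> : B_poly n E X * I_poly E N X * K * q ^ (y2 - e)
      = X ^ n * (X ^ (m - n) - 1).
    by rewrite -mulnA -AK mulnAC AY IP -mulnA YI.
  rewrite H0.
  have -> : q ^ y2 = q ^ e * q ^ (y2 - e) by rewrite -expnD subnKC // ltnW.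
  by rewrite mulnAC.
- move=> E1.
  rewrite /A_poly E1 ?eqxx /= in AK.
  rewrite E1 expn1 subn1 in HW.
  have Xd : q ^ (y2 - e) <= X - 1 by rewrite AK leq_pmull.
  have : q ^ ((y2 - e) * m) < q ^ y1.
    apply: leq_ltn_trans HW.
    have -> : (y2 - e) * m = (y2 - e) * m.-1 + (y2 - e).
      by rewrite -{3}(muln1 (y2 - e)) -mulnDr addn1 prednK.
    rewrite expnD expnM; apply: leq_mul => //.
    rewrite leq_exp2r; first exact: (leq_trans Xd (leq_subr 1 X)).
    by clear - m3; lia.
  rewrite ltn_exp2l // => Hl.
  split; last by move=> _; rewrite mulnC.
  by clear - Hl m3; nia.
- move=> E1.
  have E1n : E != 1 by rewrite neq_ltn E1 orbT.
  have GX : A_poly E X * (X - 1) = X ^ E - 1.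
    by rewrite /A_poly (negbTE E1n) mulnC -/(gs X E) gs_geom.
  have Em' : E <= m by exact: (leq_trans Em (leq_subr n m)).
  split.
    move=> K1.
    have Hl := iia X1 q1 K1 AK GX E1 Em' HW.
    have b0 : (0 < INR (E - 1))%Re by apply: lt_0_INR; apply/ltP; rewrite subn_gt0.
    have Hr : (INR ((y2 - e) * m) <= INR (y1 * (E - 1)))%Re.
      by apply: le_INR; apply/leP; exact: ltnW.
    rewrite !INR_muln in Hr.
    apply: Rle_ge; apply: (Rmult_le_reg_r (INR (E - 1))) => //.
    have -> : (INR m / INR (E - 1) * INR (y2 - e) * INR (E - 1) = INR (y2 - e) * INR m)%Re.
      by field; lra.
    lra.
  move=> delta Hc.
  case: (leqP (2 * (y2 - e)) y1) => // Hlt; exfalso.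
  have Ab : A_poly E X < 2 * X ^ (E - 1).
    rewrite /A_poly (negbTE E1n).
    by have := gs_bound (E - 1) X1; rewrite subn1 prednK.
  pose del := if q ^ y1 < X ^ m then 1 else 0.
  have Hdel : X ^ m <= 2 ^ del * q ^ y1.
    rewrite /del; case: ifP => Hc'; last by rewrite expn0 mul1n leqNgt Hc'.
    rewrite expn1.
    have H1 : X ^ n * 2 <= X ^ m.
      rewrite -(subnKC (ltnW nm)) expnD leq_mul2l; apply/orP; right.
      by apply: Xg1.
    have H2 : 0 < q ^ y2 by rewrite expn_gt0 prime_gt0.
    by clear - H1 H2 Heq; lia.
  have Hi := iib X1 q1 K0 AK Ab m0 E1 Hdel.
  have Hi2 : q ^ ((y2 - e) * m) < 2 ^ (m + del * (E - 1)) * q ^ ((2 * (y2 - e) - 1) * (E - 1)).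
    apply: (leq_trans Hi); rewrite leq_mul2l; apply/orP; right.
    rewrite leq_pexp2l ?prime_gt0 // leq_mul2r; apply/orP; right.
    by clear - Hlt; lia.
  have d1 : 1 <= y2 - e by rewrite subn_gt0.
  have E1R : (1 <= INR E)%Re by apply: (le_INR 1); apply/leP.
  have m0R : (0 < INR m)%Re by apply: lt_0_INR; apply/ltP.
  apply: (real_part (D := (INR m + delta * (INR E - 1))%Re)) Hi2 Hc => //.
  + rewrite /delta /del; case: ifP => _; rewrite ?mul1n ?mul0n ?addn0 ?INR_addn ?INR_subn //; simpl INR; ring.
  + rewrite /delta; case: ifP => _; lra.
Qed.
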